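(* Let $m$ be an odd positive integer, $k\ge0$ an integer and $N=k+\frac{m-1}{2}$. Then for real $x_0$ and $r>0$ the following identities hold: \[\text{(i)}\quad \sum_{n=0}^{N}\binom{N}{n}(-2)^{-n}D_r(n)[\cos(2x_0r)]=\exp\left(-x_0^2\right)\sum_{n=0}^\infty\frac{2^{2n}n!\,x_0^{2n}}{(2n)!}L_n^{\left(k+\frac m2-1\right)}\left(r^2\right),\] \[\text{(ii)}\quad \sum_{n=0}^{N}\binom{N}{n}(-2)^{-n}D^r(n)[\sin(2x_0r)]=\exp\left(-x_0^2\right)\sum_{n=0}^\infty\frac{2^{2n+1}n!\,x_0^{2n+1}}{(2n+1)!}\,r\,L_n^{\left(k+\frac m2\right)}\left(r^2\right),\] where $L_n^{(a)}$ denote the generalized Laguerre polynomials.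
   Context: The operators act in the variable $r>0$ (with $x_0$ a parameter): $D_r(n)[f]=(r^{-1}\partial_r)^nf$ and $D^r(n)[f]=(\partial_r\circ r^{-1})^nf$ (i.e. $n$-fold application of $f\mapsto\partial_r(f/r)$), with $D_r(0)=D^r(0)=\mathrm{id}$. *)

(* Defs.v *)
From Stdlib Require Import Reals Arith Factorial Binomial.
From Coquelicot Require Import Coquelicot.
Open Scope R_scope.

Fixpoint D_r (n : nat) (f : R -> R) : R -> R :=
  match n with
  | O => f
  | S n' => fun r => / r * Derive (D_r n' f) r
  end.

Fixpoint D_up_r (n : nat) (f : R -> R) : R -> R :=
  match n with
  | O => f
  | S n' => fun r => Derive (fun s => D_up_r n' f s / s) r
  end.

Fixpoint binomR (s : R) (k : nat) : R :=
  match k with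
  | O => 1
  | S k' => binomR s k' * (s - INR k') / INR (S k')
  end.

Definition laguerre (n : nat) (a x : R) : R :=
  sum_f_R0 (fun j => (-1) ^ j * binomR (INR n + a) (n - j) * x ^ j / INR (fact j)) n.

(* Main.v *)
Require Import Defs.
From Stdlib Require Import Reals Arith Lia Lra Factorial Binomial.
From Coquelicot Require Import Coquelicot.
Open Scope R_scope.

Fixpoint poch (c : R) (n : nat) : R :=
  match n with O => 1 | S n' => poch c n' * (c + INR n') end.
Fixpoint ff (x : R) (n : nat) : R :=
  match n with O => 1 | S n' => ff x n' * (x - INR n') end.

Lemma poch_pos c n : 0 < c -> 0 < poch c n.
Proof. intros Hc; induction n; simpl. lra.
  apply Rmult_lt_0_compat; auto. pose proof (pos_INR n). lra. Qed.

Lemma poch_S_shift c m : poch c (S m) = c * poch (c+1) m.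
Proof. induction m. simpl; ring.
  change (poch c (S (S m))) with (poch c (S m) * (c + INR (S m))).
  rewrite IHm. cbn [poch]. rewrite S_INR. ring. Qed.

Lemma poch_add b j n : poch b (n + j) = poch b j * poch (b + INR j) n.
Proof. induction n. simpl; ring.
  cbn [Nat.add poch]. rewrite IHn, plus_INR. ring. Qed.

Lemma ff_pascal x n : ff (x+1) (S n) = ff x (S n) + INR (S n) * ff x n.
Proof. induction n. simpl; ring.
  change (ff (x+1) (S (S n))) with (ff (x+1) (S n) * (x + 1 - INR (S n))).
  change (ff x (S (S n))) with (ff x (S n) * (x - INR (S n))).
  rewrite IHn. change (ff x (S n)) with (ff x n * (x - INR n)).
  rewrite !S_INR. ring. Qed.

Lemma ff_Sl x t : ff (x+1) (S t) = (x+1) * ff x t.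
Proof. induction t. simpl; ring.
  change (ff (x+1) (S (S t))) with (ff (x+1) (S t) * (x + 1 - INR (S t))).
  rewrite IHt. cbn [ff]. rewrite S_INR. ring. Qed.

Lemma ff_poch c t : ff (c + INR t - 1) t = poch c t.
Proof. induction t. reflexivity.
  replace (c + INR (S t) - 1) with ((c + INR t - 1) + 1) by (rewrite S_INR; ring).
  rewrite ff_Sl, IHt. cbn [poch]. ring. Qed.

Lemma ff_nat_zero N n : (N < n)%nat -> ff (INR N) n = 0.
Proof. induction n; intros H. lia.
  simpl. destruct (Nat.eq_dec N n). subst; ring.
  rewrite IHn by lia. ring. Qed.

Lemma ff_fact N n : (n <= N)%nat -> ff (INR N) n * INR (fact (N - n)) = INR (fact N).
Proof. induction n; intros H. simpl. rewrite Nat.sub_0_r; ring.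
  cbn [ff]. rewrite <- IHn by lia.
  replace (N - n)%nat with (S (N - S n)) by lia. rewrite fact_simpl, mult_INR.
  rewrite S_INR, minus_INR by lia. rewrite S_INR. ring. Qed.

Lemma C_ff N n : (n <= N)%nat -> Binomial.C N n = ff (INR N) n / INR (fact n).
Proof. intros H. unfold Binomial.C. rewrite <- (ff_fact N n H).
  pose proof (INR_fact_neq_0 n). pose proof (INR_fact_neq_0 (N-n)). field; auto. Qed.

Lemma binomR_ff s t : binomR s t = ff s t / INR (fact t).
Proof. induction t. simpl; field.
  cbn [binomR ff]. rewrite IHt. rewrite fact_simpl, mult_INR.
  pose proof (INR_fact_neq_0 t). pose proof (pos_INR t).
  rewrite S_INR. field. split; auto. lra. Qed.

Lemma sum_ext_zero f a d : (forall n, (a < n)%nat -> f n = 0) ->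
  sum_f_R0 f (a + d) = sum_f_R0 f a.
Proof. intros H. induction d. now rewrite Nat.add_0_r.
  rewrite Nat.add_succ_r. simpl. rewrite IHd, H by lia. ring. Qed.

Lemma sum_ext_zero' f a b : (a <= b)%nat -> (forall n, (a < n)%nat -> f n = 0) ->
  sum_f_R0 f b = sum_f_R0 f a.
Proof. intros Hab H. replace b with (a + (b - a))%nat by lia. now apply sum_ext_zero. Qed.

Lemma rect_swap (f : nat -> nat -> R) M N :
  sum_f_R0 (fun i => sum_f_R0 (fun j => f i j) M) N =
  sum_f_R0 (fun j => sum_f_R0 (fun i => f i j) N) M.
Proof. induction N. simpl. reflexivity.
  simpl. rewrite IHN. rewrite <- sum_plus. reflexivity. Qed.

Lemma tri_swap (f : nat -> nat -> R) p :
  sum_f_R0 (fun n => sum_f_R0 (fun j => f n j) (p - n)) p =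
  sum_f_R0 (fun j => sum_f_R0 (fun n => f n j) (p - j)) p.
Proof.
  transitivity (sum_f_R0 (fun n => sum_f_R0 (fun j => if (n + j <=? p)%nat then f n j else 0) p) p).
  { apply sum_eq. intros n Hn.
    rewrite (sum_ext_zero' _ (p - n) p); [ | lia | ].
    - apply sum_eq. intros j Hj. replace (n + j <=? p)%nat with true; auto.
      symmetry; apply Nat.leb_le; lia.
    - intros j Hj. replace (n + j <=? p)%nat with false; auto.
      symmetry; apply Nat.leb_gt; lia. }
  rewrite rect_swap.
  apply sum_eq. intros j Hj.
  rewrite (sum_ext_zero' _ (p - j) p); [ | lia | ].
  - apply sum_eq. intros n Hn. replace (n + j <=? p)%nat with true; auto.
    symmetry; apply Nat.leb_le; lia.
  - intros n Hn. replace (n + j <=? p)%nat with false; auto.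
    symmetry; apply Nat.leb_gt; lia.
Qed.

Lemma poch_neq0 c n : 0 < c -> poch c n <> 0.
Proof. intros; apply Rgt_not_eq, poch_pos; auto. Qed.

Lemma vander N : forall t c, 0 < c ->
  sum_f_R0 (fun n => ff (INR N) n / (INR (fact n) * poch c n * INR (fact (t - n)))) t
  = ff (INR t + INR N - 1 + c) t / (INR (fact t) * poch c t).
Proof.
  induction N; intros t c Hc.
  - replace (ff (INR t + INR 0 - 1 + c) t) with (poch c t)
      by (rewrite <- ff_poch; f_equal; simpl; ring).
    destruct t.
    + simpl. field.
    + rewrite decomp_sum by lia. simpl pred.
      rewrite sum_eq with (Bn := fun _ => 0).
      2:{ intros i _. rewrite ff_nat_zero by lia.
          unfold Rdiv. ring. }
      rewrite sum_cte. rewrite Nat.sub_0_r.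
      pose proof (INR_fact_neq_0 (S t)). pose proof (poch_neq0 c (S t) Hc).
      replace (INR (fact 0)) with 1 by reflexivity. replace (ff (INR 0) 0) with 1 by reflexivity.
      replace (poch c 0) with 1 by reflexivity.
      field; auto.
  - destruct t.
    + simpl. field.
    + rewrite decomp_sum by lia. simpl pred.
      rewrite sum_eq with (Bn := fun i => ff (INR N) (S i) / (INR (fact (S i)) * poch c (S i) * INR (fact (S t - S i)))
         + (ff (INR N) i / (INR (fact i) * poch (c+1) i * INR (fact (t - i)))) * / c).
      2:{ intros i Hi. rewrite S_INR. rewrite ff_pascal.
          rewrite poch_S_shift. replace (S t - S i)%nat with (t - i)%nat by lia.
          rewrite fact_simpl, mult_INR.
          pose proof (INR_fact_neq_0 i). pose proof (INR_fact_neq_0 (t-i)).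
          pose proof (poch_neq0 (c+1) i ltac:(lra)). rewrite S_INR.
          pose proof (pos_INR i). assert (INR i + 1 <> 0) by lra. assert (c <> 0) by lra.
          field. repeat split; auto. }
      rewrite sum_plus, <- scal_sum.
      rewrite (IHN t (c+1)) by lra.
      transitivity (sum_f_R0 (fun n => ff (INR N) n / (INR (fact n) * poch c n * INR (fact (S t - n)))) (S t)
         + ff (INR t + INR N - 1 + (c+1)) t / (INR (fact t) * poch (c + 1) t) * / c).
      { rewrite (decomp_sum _ (S t)) by lia. simpl pred.
        replace (ff (INR (S N)) 0) with 1 by reflexivity.
        replace (ff (INR N) 0) with 1 by reflexivity.
        rewrite Nat.sub_0_r. ring. }
      rewrite IHN by lra.
      replace (INR (S t) + INR (S N) - 1 + c) with ((INR (S t) + INR N - 1 + c) + 1)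
        by (rewrite !S_INR; ring).
      rewrite ff_pascal.
      replace (INR t + INR N - 1 + (c + 1)) with (INR (S t) + INR N - 1 + c) by (rewrite S_INR; ring).
      rewrite (poch_S_shift c t), (fact_simpl t), mult_INR.
      pose proof (INR_fact_neq_0 t). pose proof (poch_neq0 (c+1) t ltac:(lra)).
      pose proof (pos_INR t). rewrite S_INR. assert (INR t + 1 <> 0) by lra. assert (c <> 0) by lra.
      field. repeat split; auto.
Qed.

Definition Rcoef (b u : R) (n t : nat) : R :=
  sum_f_R0 (fun j => (-1)^j * u^j / (INR (fact j) * poch b (j + n) * INR (fact (t - j)))) t.

Lemma coef_id b N p u : 0 < b ->
  sum_f_R0 (fun n => Binomial.C N n * (if (n <=? p)%nat then Rcoef b u n (p - n) else 0)) N
  = / poch b p * laguerre p (INR N - 1 + b) u.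
Proof.
  intros Hb.
  set (h := fun n => if (n <=? p)%nat then ff (INR N) n / INR (fact n) * Rcoef b u n (p - n) else 0).
  transitivity (sum_f_R0 h N).
  { apply sum_eq. intros n Hn. unfold h. rewrite C_ff by lia.
    destruct (n <=? p)%nat; ring. }
  rewrite <- (sum_ext_zero' h N (N + p)); [ | lia | ].
  2:{ intros n Hn. unfold h. rewrite ff_nat_zero by lia. destruct (n <=? p)%nat; unfold Rdiv; ring. }
  rewrite (sum_ext_zero' h p (N + p)); [ | lia | ].
  2:{ intros n Hn. unfold h. replace (n <=? p)%nat with false; auto. symmetry; apply Nat.leb_gt; lia. }
  transitivity (sum_f_R0 (fun n => sum_f_R0 (fun j =>
     ff (INR N) n / INR (fact n) * ((-1)^j * u^j / (INR (fact j) * poch b (j + n) * INR (fact (p - n - j))))) (p - n)) p).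
  { apply sum_eq. intros n Hn. unfold h. replace (n <=? p)%nat with true by (symmetry; apply Nat.leb_le; lia).
    unfold Rcoef. rewrite scal_sum. apply sum_eq. intros j Hj. ring. }
  rewrite tri_swap.
  unfold laguerre. rewrite scal_sum. apply sum_eq. intros j Hj.
  transitivity ((-1)^j * u^j / INR (fact j) / poch b j *
    sum_f_R0 (fun n => ff (INR N) n / (INR (fact n) * poch (b + INR j) n * INR (fact ((p - j) - n)))) (p - j)).
  { rewrite scal_sum. apply sum_eq. intros n Hn.
    rewrite Nat.add_comm, poch_add. replace (p - n - j)%nat with (p - j - n)%nat by lia.
    pose proof (INR_fact_neq_0 n). pose proof (INR_fact_neq_0 j). pose proof (INR_fact_neq_0 (p - j - n)).
    pose proof (poch_neq0 b j Hb). pose proof (poch_neq0 (b + INR j) n ltac:(pose proof (pos_INR j); lra)).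
    field. repeat split; auto. }
  rewrite vander by (pose proof (pos_INR j); lra).
  rewrite binomR_ff.
  replace (INR (p - j) + INR N - 1 + (b + INR j)) with (INR p + (INR N - 1 + b)) by (rewrite minus_INR by lia; ring).
  replace (poch b p) with (poch b j * poch (b + INR j) (p - j)) by (rewrite <- poch_add; f_equal; lia).
  pose proof (INR_fact_neq_0 j). pose proof (INR_fact_neq_0 (p - j)).
  pose proof (poch_neq0 b j Hb). pose proof (poch_neq0 (b + INR j) (p - j) ltac:(pose proof (pos_INR j); lra)).
  field. repeat split; auto.
Qed.

Definition g (b y : R) (j : nat) : R := (-y)^j / (INR (fact j) * poch b j).

Lemma poch_ge b n : 1/2 <= b -> 1 <= poch b n * 2^n.
Proof. intros Hb. induction n. simpl; lra.
  cbn [poch pow]. pose proof (pos_INR n).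
  replace (poch b n * (b + INR n) * (2 * 2 ^ n)) with ((poch b n * 2^n) * (2 * (b + INR n))) by ring.
  assert (1 <= 2 * (b + INR n)) by lra. nra. Qed.

Lemma ex_exp_series z : ex_series (fun n => z^n / INR (fact n)).
Proof. eexists. eapply is_series_ext. 2: apply (is_exp_Reals z).
  intros n. simpl. rewrite pow_n_pow. unfold scal; simpl. unfold mult; simpl. unfold Rdiv. ring. Qed.

Lemma CV_disk_g b y x : 1/2 <= b -> CV_disk (g b y) x.
Proof. intros Hb. unfold CV_disk.
  apply (@ex_series_le R_AbsRing R_CompleteNormedModule _ (fun n => (2 * Rabs y * Rabs x)^n / INR (fact n))).
  2: apply ex_exp_series.
  intros n. change (norm (Rabs (g b y n * x ^ n))) with (Rabs (Rabs (g b y n * x ^ n))).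
  rewrite Rabs_Rabsolu. unfold g.
  pose proof (poch_ge b n Hb). pose proof (INR_fact_lt_0 n).
  assert (0 < poch b n) by (apply poch_pos; lra).
  assert (0 < 2^n) by (apply pow_lt; lra).
  rewrite Rabs_mult, Rabs_div by (apply Rmult_integral_contrapositive; split; lra).
  rewrite <- !RPow_abs, Rabs_Ropp. rewrite (Rabs_right (_ * _)) by nra.
  rewrite !Rpow_mult_distr.
  pose proof (pow_le (Rabs y) n (Rabs_pos y)). pose proof (pow_le (Rabs x) n (Rabs_pos x)).
  set (A := Rabs y ^ n * Rabs x ^ n).
  assert (0 <= A) by (unfold A; nra).
  replace (Rabs y ^ n / (INR (fact n) * poch b n) * Rabs x ^ n) with (A / (INR (fact n) * poch b n)) by (unfold A; field; lra).
  replace (2 ^ n * Rabs y ^ n * Rabs x ^ n / INR (fact n)) with (2^n * A / INR (fact n)) by (unfold A; field; lra).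
  unfold Rdiv. rewrite Rinv_mult.
  assert (/ poch b n <= 2^n).
  { apply (Rmult_le_reg_l (poch b n)); auto. rewrite Rinv_r by lra. lra. }
  assert (0 <= A * / INR (fact n)) by (apply Rmult_le_pos; auto; left; apply Rinv_0_lt_compat; lra).
  replace (A * (/ INR (fact n) * / poch b n)) with ((A * / INR (fact n)) * / poch b n) by ring.
  replace (2 ^ n * A * / INR (fact n)) with ((A * / INR (fact n)) * 2^n) by ring.
  apply Rmult_le_compat_l; auto.
Qed.

Lemma radius_inf (a : nat -> R) : (forall x, CV_disk a x) -> CV_radius a = p_infty.
Proof. intros H. unfold CV_radius. destruct (Lub_Rbar_correct (CV_disk a)) as [Hub _].
  destruct (Lub_Rbar (CV_disk a)) eqn:E; auto.
  - specialize (Hub (r + 1) (H _)). simpl in Hub. lra.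
  - specialize (Hub 0 (H _)). simpl in Hub. contradiction.
Qed.

Lemma radius_g b y : 1/2 <= b -> CV_radius (g b y) = p_infty.
Proof. intros Hb. apply radius_inf. intros x. now apply CV_disk_g. Qed.

Lemma fact_even j : INR (fact (2*j)) = 4^j * INR (fact j) * poch (1/2) j.
Proof. induction j. simpl; ring.
  replace (2 * S j)%nat with (S (S (2 * j))) by lia.
  rewrite !fact_simpl, !mult_INR, IHj. cbn [poch pow]. rewrite !S_INR, mult_INR.
  change (INR 2) with (1+1). field. Qed.

Lemma fact_odd j : INR (fact (2*j+1)) = 4^j * INR (fact j) * poch (3/2) j.
Proof. induction j. simpl; ring.
  replace (2 * S j + 1)%nat with (S (S (2 * j + 1))) by lia.
  rewrite !fact_simpl, !mult_INR, IHj. cbn [poch pow]. rewrite !S_INR, plus_INR, mult_INR.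
  change (INR 2) with (1+1). change (INR 1) with 1. field. Qed.

Lemma PS_derive_n_S a n k : PS_derive (PS_derive_n n a) k = PS_derive_n (S n) a k.
Proof. unfold PS_derive, PS_derive_n. replace (S k + n)%nat with (k + S n)%nat by lia.
  rewrite fact_simpl, mult_INR. pose proof (INR_fact_neq_0 k). pose proof (pos_INR k).
  rewrite S_INR. field. lra. Qed.

Lemma is_derive_sq a s : CV_radius a = p_infty ->
  is_derive (fun t => PSeries a (t^2)) s (2 * s * PSeries (PS_derive a) (s^2)).
Proof. intros Ha.
  assert (H1 : is_derive (fun t : R => t^2) s (2 * s)).
  { auto_derive; auto. ring. }
  assert (H2 : is_derive (PSeries a) (s^2) (PSeries (PS_derive a) (s^2))).
  { apply is_derive_PSeries. rewrite Ha. exact I. }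
  exact (is_derive_comp (PSeries a) (fun t => t^2) s _ _ H2 H1).
Qed.

Lemma locally_pos s : 0 < s -> locally s (fun t => 0 < t).
Proof. intros Hs. exists (mkposreal s Hs). intros t Ht.
  change (Rabs (t - s) < s) in Ht. apply Rabs_def2 in Ht. lra. Qed.

Lemma cos_ps x0 s : cos (2*x0*s) = PSeries (g (1/2) (x0^2)) (s^2).
Proof. unfold cos. destruct (exist_cos (Rsqr (2*x0*s))) as [l Hl]. unfold cos_in in Hl.
  symmetry. apply is_series_unique. apply is_series_Reals in Hl.
  eapply is_series_ext. 2: exact Hl. intros i.
  change (cos_n i * (Rsqr (2*x0*s))^i = g (1/2) (x0^2) i * (s^2)^i).
  unfold cos_n, g, Rsqr. rewrite fact_even.
  replace (- x0^2) with ((-1) * x0^2) by ring.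
  replace (2 * x0 * s * (2 * x0 * s)) with (4 * x0^2 * s^2) by ring.
  rewrite !Rpow_mult_distr.
  pose proof (INR_fact_neq_0 i). pose proof (poch_neq0 (1/2) i ltac:(lra)).
  pose proof (pow_lt 4 i ltac:(lra)).
  field. repeat split; auto; lra. Qed.

Lemma sin_ps x0 s : sin (2*x0*s) = 2 * x0 * s * PSeries (g (3/2) (x0^2)) (s^2).
Proof. unfold sin. destruct (exist_sin (Rsqr (2*x0*s))) as [l Hl]. unfold sin_in in Hl.
  f_equal. symmetry. apply is_series_unique. apply is_series_Reals in Hl.
  eapply is_series_ext. 2: exact Hl. intros i.
  change (sin_n i * (Rsqr (2*x0*s))^i = g (3/2) (x0^2) i * (s^2)^i).
  unfold sin_n, g, Rsqr. rewrite fact_odd.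
  replace (- x0^2) with ((-1) * x0^2) by ring.
  replace (2 * x0 * s * (2 * x0 * s)) with (4 * x0^2 * s^2) by ring.
  rewrite !Rpow_mult_distr.
  pose proof (INR_fact_neq_0 i). pose proof (poch_neq0 (3/2) i ltac:(lra)).
  pose proof (pow_lt 4 i ltac:(lra)).
  field. repeat split; auto; lra. Qed.

Definition Gn (b y : R) (n : nat) (u : R) : R := PSeries (PS_derive_n n (g b y)) u.

Lemma is_derive_Gn b y n s : 1/2 <= b ->
  is_derive (fun t => Gn b y n (t^2)) s (2 * s * Gn b y (S n) (s^2)).
Proof. intros Hb. unfold Gn.
  rewrite <- (PSeries_ext _ _ _ (PS_derive_n_S (g b y) n)).
  apply is_derive_sq. rewrite CV_radius_derive_n. now apply radius_g. Qed.

Lemma D_r_cos x0 n : forall s, 0 < s ->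
  D_r n (fun s => cos (2*x0*s)) s = 2^n * Gn (1/2) (x0^2) n (s^2).
Proof. induction n; intros s Hs.
  - cbn [D_r]. rewrite cos_ps. unfold Gn. rewrite pow_O, Rmult_1_l. apply PSeries_ext.
    intros k. unfold PS_derive_n. rewrite Nat.add_0_r. field. apply INR_fact_neq_0.
  - cbn [D_r]. rewrite (Derive_ext_loc _ (fun t => 2^n * Gn (1/2) (x0^2) n (t^2))).
    2:{ generalize (locally_pos s Hs). apply filter_imp. intros t Ht. now apply IHn. }
    rewrite (is_derive_unique _ _ (2^n * (2 * s * Gn (1/2) (x0^2) (S n) (s^2)))).
    2:{ apply is_derive_scal, is_derive_Gn. lra. }
    simpl. field. lra.
Qed.

Lemma D_up_r_sin x0 n : forall s, 0 < s ->
  D_up_r n (fun s => sin (2*x0*s)) s = s * (2^n * (2 * x0) * Gn (3/2) (x0^2) n (s^2)).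
Proof. induction n; intros s Hs.
  - cbn [D_up_r]. rewrite sin_ps. unfold Gn. replace (PSeries (PS_derive_n 0 (g (3 / 2) (x0 ^ 2))) (s^2))
      with (PSeries (g (3 / 2) (x0 ^ 2)) (s^2)). rewrite pow_O; ring.
    apply PSeries_ext.
    intros k. unfold PS_derive_n. rewrite Nat.add_0_r. field. apply INR_fact_neq_0.
  - cbn [D_up_r]. rewrite (Derive_ext_loc _ (fun t => 2^n * (2 * x0) * Gn (3/2) (x0^2) n (t^2))).
    2:{ generalize (locally_pos s Hs). apply filter_imp. intros t Ht. rewrite IHn by auto. field. lra. }
    rewrite (is_derive_unique _ _ (2^n * (2 * x0) * (2 * s * Gn (3/2) (x0^2) (S n) (s^2)))).
    2:{ apply is_derive_scal, is_derive_Gn. lra. }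
    simpl. field.
Qed.

Lemma is_series_sum (F : nat -> nat -> R) (L : nat -> R) M :
  (forall n, is_series (F n) (L n)) ->
  is_series (fun p => sum_f_R0 (fun n => F n p) M) (sum_f_R0 L M).
Proof. intros H. induction M.
  - simpl. apply H.
  - simpl. exact (is_series_plus _ _ _ _ IHM (H (S M))). Qed.

Lemma is_series_shift (a : nat -> R) n l : is_series a l ->
  is_series (fun p => if (n <=? p)%nat then a (p - n)%nat else 0) l.
Proof. intros H. destruct n.
  - eapply is_series_ext. 2: exact H. intros p. simpl. now rewrite Nat.sub_0_r.
  - apply (is_series_decr_n _ (S n)). lia.
    match goal with |- is_series _ ?L => replace L with l end.
    + eapply is_series_ext. 2: exact H. intros k.
      replace (S n <=? S n + k)%nat with true by (symmetry; apply Nat.leb_le; lia).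
      f_equal. lia.
    + rewrite sum_n_Reals. simpl pred.
      rewrite sum_eq with (Bn := fun _ => 0).
      * rewrite sum_cte, Rmult_0_l. unfold plus, opp; simpl. rewrite Ropp_0, Rplus_0_r. reflexivity.
      * intros i Hi. replace (S n <=? i)%nat with false; auto. symmetry; apply Nat.leb_gt; lia.
Qed.

Lemma Gn_series b y n u : 1/2 <= b ->
  is_series (fun j => PS_derive_n n (g b y) j * u^j) (Gn b y n u) /\
  ex_series (fun j => Rabs (PS_derive_n n (g b y) j * u^j)).
Proof. intros Hb.
  assert (Hr : Rbar_lt (Rabs u) (CV_radius (PS_derive_n n (g b y)))).
  { rewrite CV_radius_derive_n, radius_g by auto. exact I. }
  split.
  - pose proof (PSeries_correct _ _ (CV_radius_inside _ _ Hr)) as H.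
    eapply is_series_ext. 2: exact H. intros k. simpl. rewrite pow_n_pow.
    unfold scal; simpl. unfold mult; simpl. ring.
  - apply (CV_disk_inside _ _ Hr).
Qed.

Lemma exp_series y : 0 <= y ->
  is_series (fun i => y^i / INR (fact i)) (exp y) /\
  ex_series (fun i => Rabs (y^i / INR (fact i))).
Proof. intros Hy. split.
  - eapply is_series_ext. 2: apply (is_exp_Reals y).
    intros n. simpl. rewrite pow_n_pow. unfold scal; simpl. unfold mult; simpl. unfold Rdiv. ring.
  - eapply ex_series_ext. 2: apply (ex_exp_series y). intros n. simpl.
    rewrite Rabs_right; auto. apply Rle_ge. apply Rdiv_le_0_compat.
    now apply pow_le. apply INR_fact_lt_0.
Qed.

Lemma cauchy_term b y u n t : 0 < b ->
  sum_f_R0 (fun k => PS_derive_n n (g b y) k * u^k * (y^(t - k) / INR (fact (t - k)))) t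
  = (-1)^n * y^(n + t) * Rcoef b u n t.
Proof. intros Hb. unfold Rcoef. rewrite scal_sum. apply sum_eq. intros k Hk.
  unfold PS_derive_n, g.
  replace (- y) with ((-1) * y) by ring. rewrite Rpow_mult_distr.
  replace (n + t)%nat with ((k + n) + (t - k))%nat by lia. rewrite !pow_add.
  pose proof (INR_fact_neq_0 k). pose proof (INR_fact_neq_0 (k + n)). pose proof (INR_fact_neq_0 (t - k)).
  pose proof (poch_neq0 b (k + n) Hb).
  field. repeat split; auto.
Qed.

Lemma main_series b N y u : 1/2 <= b -> 0 <= y ->
  is_series (fun p => y^p / poch b p * laguerre p (INR N - 1 + b) u)
    (exp y * sum_f_R0 (fun n => Binomial.C N n * (-1)^n * Gn b y n u) N).
Proof. intros Hb Hy.
  destruct (exp_series y Hy) as [He1 He2].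
  assert (Hn : forall n, is_series (fun p => Binomial.C N n * (-1)^n *
      (if (n <=? p)%nat then (-1)^n * y^(n + (p - n)) * Rcoef b u n (p - n) else 0))
      (Binomial.C N n * (-1)^n * (Gn b y n u * exp y))).
  { intros n. destruct (Gn_series b y n u Hb) as [Hg1 Hg2].
    pose proof (is_series_mult _ _ _ _ Hg1 He1 Hg2 He2) as Hm.
    apply (is_series_ext _ (fun t => (-1)^n * y^(n + t) * Rcoef b u n t)) in Hm.
    2: { intros t. rewrite <- cauchy_term by lra. apply sum_eq. intros; ring. }
    apply (is_series_shift _ n) in Hm.
    apply (is_series_scal (Binomial.C N n * (-1)^n)) in Hm.
    exact Hm. }
  pose proof (is_series_sum _ _ N Hn) as H.
  replace (exp y * sum_f_R0 (fun n => Binomial.C N n * (-1)^n * Gn b y n u) N)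
    with (sum_f_R0 (fun n => Binomial.C N n * (-1)^n * (Gn b y n u * exp y)) N).
  2: { rewrite scal_sum. apply sum_eq. intros; ring. }
  eapply is_series_ext. 2: exact H. intros p. simpl.
  transitivity (y^p * sum_f_R0 (fun n => Binomial.C N n * (if (n <=? p)%nat then Rcoef b u n (p-n) else 0)) N).
  2:{ rewrite coef_id by lra. unfold Rdiv; ring. }
  rewrite scal_sum. apply sum_eq. intros n Hn'.
  destruct (n <=? p)%nat eqn:E.
  - apply Nat.leb_le in E. replace (n + (p - n))%nat with p by lia.
    transitivity (Binomial.C N n * ((-1)^n * (-1)^n) * (y^p * Rcoef b u n (p - n))). ring.
    replace ((-1)^n * (-1)^n) with 1. ring. rewrite <- Rpow_mult_distr. replace (-1 * -1) with 1 by ring. now rewrite pow1.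
  - ring.
Qed.

Lemma inv_m2 n : / (-2)^n * 2^n = (-1)^n.
Proof. replace (-2) with ((-1) * 2) by ring. rewrite Rpow_mult_distr.
  pose proof (pow_lt 2 n ltac:(lra)).
  rewrite Rinv_mult, Rmult_assoc, Rinv_l, Rmult_1_r by lra.
  rewrite <- pow_inv. f_equal. field. Qed.

Theorem corollary1 (m k : nat) (Hm : Nat.Odd m) (x0 r : R) (Hr : 0 < r) :
  let N := (k + (m - 1) / 2)%nat in
  let a := INR k + INR m / 2 - 1 in
  (exists S : R,
     is_series (fun n : nat =>
        2 ^ (2 * n) * INR (fact n) * x0 ^ (2 * n) / INR (fact (2 * n))
        * laguerre n a (r ^ 2)) S /\
     sum_f_R0 (fun n => Binomial.C N n * / (-2) ^ n
                        * D_r n (fun s => cos (2 * x0 * s)) r) N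
     = exp (- x0 ^ 2) * S) /\
  (exists S : R,
     is_series (fun n : nat =>
        2 ^ (2 * n + 1) * INR (fact n) * x0 ^ (2 * n + 1) / INR (fact (2 * n + 1))
        * r * laguerre n (a + 1) (r ^ 2)) S /\
     sum_f_R0 (fun n => Binomial.C N n * / (-2) ^ n
                        * D_up_r n (fun s => sin (2 * x0 * s)) r) N
     = exp (- x0 ^ 2) * S).
Proof.
  intros N a. destruct Hm as [t Ht].
  assert (HN : N = (k + t)%nat).
  { unfold N. f_equal. replace (m - 1)%nat with (t * 2)%nat by lia. apply Nat.div_mul. lia. }
  assert (Ha : a = INR N - 1 + 1/2).
  { unfold a. rewrite HN, Ht, plus_INR, plus_INR, mult_INR. simpl. field. }
  assert (Hy : 0 <= x0^2) by (apply pow2_ge_0).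
  assert (Hexp : forall X, exp (- x0^2) * (exp (x0^2) * X) = X).
  { intros X. rewrite <- Rmult_assoc, <- exp_plus, Rplus_opp_l, exp_0. ring. }
  split.
  - exists (exp (x0^2) * sum_f_R0 (fun n => Binomial.C N n * (-1)^n * Gn (1/2) (x0^2) n (r^2)) N).
    split.
    + eapply is_series_ext. 2: apply (main_series (1/2) N (x0^2) (r^2)); lra.
      intros n. rewrite Ha. rewrite fact_even, !pow_mult.
      pose proof (INR_fact_neq_0 n). pose proof (poch_neq0 (1/2) n ltac:(lra)).
      pose proof (pow_lt 4 n ltac:(lra)). replace (2^2) with 4 by ring.
      match goal with |- ?A = ?B => change (@eq R A B) end. field. repeat split; auto; lra.
    + rewrite Hexp. apply sum_eq. intros n Hn.
      rewrite D_r_cos by auto. rewrite <- inv_m2. ring.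
  - exists (2 * x0 * r * (exp (x0^2) * sum_f_R0 (fun n => Binomial.C N n * (-1)^n * Gn (3/2) (x0^2) n (r^2)) N)).
    split.
    + pose proof (is_series_scal (K:=R_AbsRing) (V:=R_NormedModule) (2*x0*r) _ _ (main_series (3/2) N (x0^2) (r^2) ltac:(lra) Hy)) as HS.
      eapply is_series_ext. 2: exact HS.
      intros n. cbv beta.
      change (scal (2*x0*r) ((x0^2)^n / poch (3/2) n * laguerre n (INR N - 1 + 3/2) (r^2))) with (2*x0*r * ((x0^2)^n / poch (3/2) n * laguerre n (INR N - 1 + 3/2) (r^2))).
      match goal with |- ?A = ?B => change (@eq R A B) end.
      assert (Ha1 : a + 1 = INR N - 1 + 3/2) by (rewrite Ha; field). rewrite Ha1.
      rewrite fact_odd, pow_add, pow_add, !pow_mult.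
      pose proof (INR_fact_neq_0 n). pose proof (poch_neq0 (3/2) n ltac:(lra)).
      pose proof (pow_lt 4 n ltac:(lra)). replace (2^2) with 4 by ring.
      field. repeat split; auto; lra.
    + rewrite (Rmult_comm (2 * x0 * r)), Rmult_assoc, Hexp.
      rewrite (Rmult_comm (sum_f_R0 (fun n => Binomial.C N n * (-1)^n * Gn (3/2) (x0^2) n (r^2)) N)), scal_sum. apply sum_eq. intros n Hn.
      rewrite D_up_r_sin by auto. rewrite <- inv_m2. ring.
Qed.
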